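(* Let $\varphi:[0,\infty)\to(0,\infty)$ be continuous and increasing with $\int_0^\infty\frac{\varphi(t)}{1+t^2}dt=\infty$. (i) If $\varphi$ is normally growing, then there is $c>0$ with $\int_0^a\frac{\varphi(x)}{x^2+1}dx\ge c\,\frac{\varphi(a)}{a}$ for all $a\ge1$. (ii) If $\varphi$ is rapidly growing, then there is $C>0$ with $\int_0^a\frac{\varphi(x)}{x^2+1}dx\le C\,\frac{\varphi(a)}{a}$ for all $a\ge1$.
   Context: $\varphi$ is normally growing if for some $A>0$ the function $\varphi(x)/x^2$ is decreasing on $[A,\infty)$ and $\varphi(x)$ is a convex function of $\log x$ on $[A,\infty)$; rapidly growing if for some $\varepsilon>0$ and $A>0$ the function $\varphi(x)/x^{1+\varepsilon}$ is increasing on $[A,\infty)$. *)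

(* Defs.v *)
From Stdlib Require Import Reals.
From Coquelicot Require Import Coquelicot.
Open Scope R_scope.

(* phi : [0,oo) -> R, represented as a total function R -> R; only values on
   [0,oo) matter. *)

Definition cont_on_nonneg (phi : R -> R) : Prop :=
  forall x, 0 <= x -> forall eps, 0 < eps -> exists delta, 0 < delta /\
    forall y, 0 <= y -> Rabs (y - x) < delta -> Rabs (phi y - phi x) < eps.

(* "increasing" on [0,oo), read as non-decreasing *)
Definition incr_on_nonneg (phi : R -> R) : Prop :=
  forall x y, 0 <= x -> x <= y -> phi x <= phi y.

Definition pos_on_nonneg (phi : R -> R) : Prop :=
  forall x, 0 <= x -> 0 < phi x.

Definition divergent_integral (phi : R -> R) : Prop :=
  is_lim (fun b => RInt (fun t => phi t / (1 + t ^ 2)) 0 b) p_infty p_infty.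

(* normally growing: for some A>0, phi(x)/x^2 is decreasing on [A,oo) and
   phi is a convex function of log x on [A,oo), i.e. s |-> phi (exp s) is
   convex on [ln A, oo). *)
Definition normally_growing (phi : R -> R) : Prop :=
  exists A, 0 < A /\
    (forall x y, A <= x -> x <= y -> phi y / y ^ 2 <= phi x / x ^ 2) /\
    (forall s t l, ln A <= s -> ln A <= t -> 0 <= l <= 1 ->
       phi (exp (l * s + (1 - l) * t)) <= l * phi (exp s) + (1 - l) * phi (exp t)).

Definition rapidly_growing (phi : R -> R) : Prop :=
  exists eps A, 0 < eps /\ 0 < A /\
    (forall x y, A <= x -> x <= y ->
       phi x / Rpower x (1 + eps) <= phi y / Rpower y (1 + eps)).

(* Main.v *)
Require Import Defs.
From Stdlib Require Import Reals Lra.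
From Coquelicot Require Import Coquelicot.
Require Import Defs.
Open Scope R_scope.

Lemma psi_cont phi : cont_on_nonneg phi -> forall x, continuity_pt (fun x => phi (Rmax 0 x)) x.
Proof.
  intros Hc x eps Heps.
  destruct (Hc (Rmax 0 x) (Rmax_l 0 x) eps Heps) as [d [Hd H]].
  exists d; split; [exact Hd|].
  intros y [_ Hy]. simpl in *. unfold R_dist in *.
  apply H. apply Rmax_l.
  eapply Rle_lt_trans; [|exact Hy].
  unfold Rmax; destruct (Rle_dec 0 y), (Rle_dec 0 x);
    unfold Rabs; repeat destruct Rcase_abs; lra.
Qed.

Lemma fint phi : cont_on_nonneg phi -> forall u v, 0 <= u <= v ->
  ex_RInt (fun x => phi x / (x^2+1)) u v.
Proof.
  intros Hc u v Huv.
  apply ex_RInt_ext with (f := fun x => phi (Rmax 0 x) / (x^2+1)).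
  { intros x Hx. rewrite Rmin_left in Hx by lra. rewrite Rmax_right in Hx by lra.
    rewrite Rmax_right by lra. reflexivity. }
  apply (@ex_RInt_continuous R_CompleteNormedModule). intros z _.
  apply continuity_pt_filterlim.
  apply continuity_pt_div.
  - apply psi_cont; auto.
  - reg.
  - nra.
Qed.

Lemma RInt_cst_le f (c u v : R) : u <= v -> ex_RInt f u v ->
  (forall x, u < x < v -> c <= f x) -> c * (v - u) <= RInt f u v.
Proof.
  intros Huv He H.
  replace (c * (v-u)) with (RInt (fun _ => c) u v).
  - apply RInt_le; auto. apply ex_RInt_const.
  - rewrite RInt_const. unfold scal; simpl; unfold mult; simpl. ring.
Qed.

Lemma RInt_le_cst f (c u v : R) : u <= v -> ex_RInt f u v ->
  (forall x, u < x < v -> f x <= c) -> RInt f u v <= c * (v - u).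
Proof.
  intros Huv He H.
  replace (c * (v-u)) with (RInt (fun _ => c) u v).
  - apply RInt_le; auto. apply ex_RInt_const.
  - rewrite RInt_const. unfold scal; simpl; unfold mult; simpl. ring.
Qed.
Lemma pow_int e B a : 0 < e -> 0 < B <= a ->
  is_RInt (fun x => Rpower x e / x) B a ((Rpower a e - Rpower B e)/e).
Proof.
  intros He HB.
  assert (H := @is_RInt_derive R_CompleteNormedModule (fun x => exp (e * ln x) / e)
     (fun x => exp (e * ln x) / x) B a).
  replace ((Rpower a e - Rpower B e)/e) with (minus (exp (e * ln a) / e) (exp (e * ln B) / e)).
  2:{ unfold minus, plus, opp; simpl. unfold Rpower. field. lra. }
  apply H.
  - intros x Hx. rewrite Rmin_left in Hx by lra. rewrite Rmax_right in Hx by lra.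
    auto_derive. lra. field. split; lra.
  - intros x Hx. rewrite Rmin_left in Hx by lra. rewrite Rmax_right in Hx by lra.
    apply (@ex_derive_continuous R_AbsRing R_NormedModule). auto_derive. lra.
Qed.

Lemma div_le r s p q : 0 < p -> 0 < q -> r * q <= s * p -> r / p <= s / q.
Proof.
  intros Hp Hq H. unfold Rdiv.
  replace (r * / p) with ((r * q) * (/ p * / q)) by (field; lra).
  replace (s * / q) with ((s * p) * (/ p * / q)) by (field; lra).
  apply Rmult_le_compat_r; [|exact H].
  left; apply Rmult_lt_0_compat; apply Rinv_0_lt_compat; auto.
Qed.

Lemma part1 phi : cont_on_nonneg phi -> incr_on_nonneg phi -> pos_on_nonneg phi ->
  normally_growing phi ->
     exists c, 0 < c /\ forall a, 1 <= a ->
       RInt (fun x => phi x / (x ^ 2 + 1)) 0 a >= c * (phi a / a).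
Proof.
  intros Hc Hi Hp [A [HA [Hdec _]]].
  set (f := fun x => phi x / (x ^ 2 + 1)).
  assert (P0 := Hp 0 (Rle_refl 0)).
  assert (P2A : 0 < phi (2*A)) by (apply Hp; lra).
  exists (Rmin (1/16) (phi 0 / (4 * phi (2*A)))).
  split.
  { apply Rmin_glb_lt; [lra|]. apply Rdiv_lt_0_compat; lra. }
  intros a Ha.
  assert (Pa2 : 0 < phi (a/2)) by (apply Hp; lra).
  assert (Pa : 0 < phi a) by (apply Hp; lra).
  assert (S1 : RInt f (a/2) a <= RInt f 0 a).
  { rewrite <- (RInt_Chasles f 0 (a/2) a) by (apply fint; auto; lra).
    assert (0 * (a/2 - 0) <= RInt f 0 (a/2)).
    { apply RInt_cst_le; [lra| apply fint; auto; lra|].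
      intros x Hx. unfold f. apply Rlt_le, Rdiv_lt_0_compat; [apply Hp; lra| nra]. }
    unfold plus; simpl. lra. }
  assert (S2 : phi (a/2) / (a^2+1) * (a - a/2) <= RInt f (a/2) a).
  { apply RInt_cst_le; [lra| apply fint; auto; lra|].
    intros x Hx. unfold f. apply div_le; try nra.
    apply Rmult_le_compat; [lra|nra|apply Hi; lra|nra]. }
  assert (S3 : phi (a/2) / (4 * a) <= phi (a/2) / (a^2+1) * (a - a/2)).
  { replace (phi (a/2) / (a^2+1) * (a - a/2)) with (phi (a/2) * a / (2 * (a^2+1)))
      by (field; nra).
    apply div_le; try nra. assert (2*(a^2+1) <= a*(4*a)) by nra.
    assert (phi (a/2) * (2*(a^2+1)) <= phi (a/2) * (a*(4*a))) by (apply Rmult_le_compat_l; lra). nra. }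
  assert (S4 : Rmin (1/16) (phi 0 / (4 * phi (2*A))) * (phi a / a) <= phi (a/2) / (4 * a)).
  { destruct (Rle_lt_dec (2*A) a) as [Hl|Hl].
    - assert (H := Hdec (a/2) a ltac:(lra) ltac:(lra)).
      assert (phi a <= 4 * phi (a/2)).
      { replace (phi (a/2)/(a/2)^2) with (4*phi(a/2)/a^2) in H by (field; lra).
        assert (H2 := Rmult_le_compat_r (a^2) _ _ ltac:(nra) H).
        replace (phi a / a^2 * a^2) with (phi a) in H2 by (field; lra).
        replace (4*phi(a/2)/a^2 * a^2) with (4*phi(a/2)) in H2 by (field; lra). exact H2. }
      apply Rle_trans with (1/16 * (phi a / a)).
      + apply Rmult_le_compat_r. apply Rlt_le, Rdiv_lt_0_compat; lra. apply Rmin_l.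
      + replace (1/16 * (phi a / a)) with (phi a / (16 * a)) by (field; lra).
        apply div_le; nra.
    - apply Rle_trans with (phi 0 / (4 * phi (2*A)) * (phi a / a)).
      + apply Rmult_le_compat_r. apply Rlt_le, Rdiv_lt_0_compat; lra. apply Rmin_r.
      + assert (phi a <= phi (2*A)) by (apply Hi; lra).
        assert (phi 0 <= phi (a/2)) by (apply Hi; lra).
        replace (phi 0 / (4 * phi (2*A)) * (phi a / a)) with
          (phi 0 * phi a / (4 * phi (2*A) * a)) by (field; lra).
        apply div_le; try nra.
        assert (phi 0 * phi a * (4 * a) <= phi 0 * phi (2*A) * (4*a)) by
          (apply Rmult_le_compat_r; [lra|]; apply Rmult_le_compat_l; lra).
        assert (phi 0 * phi (2*A) * (4*a) <= phi (a/2) * phi (2*A) * (4*a)) by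
          (apply Rmult_le_compat_r; [lra|]; apply Rmult_le_compat_r; lra).
        nra. }
  unfold f in *. lra.
Qed.

Lemma part2 phi : cont_on_nonneg phi -> incr_on_nonneg phi -> pos_on_nonneg phi ->
  rapidly_growing phi ->
     exists C, 0 < C /\ forall a, 1 <= a ->
       RInt (fun x => phi x / (x ^ 2 + 1)) 0 a <= C * (phi a / a).
Proof.
  intros Hc Hi Hp [e [A [He [HA Hinc]]]].
  set (f := fun x => phi x / (x ^ 2 + 1)).
  set (B := Rmax A 1).
  assert (HB1 : 1 <= B) by apply Rmax_r.
  assert (HBA : A <= B) by apply Rmax_l.
  exists (B^2 + 1/e). split.
  { assert (0 < 1/e) by (apply Rdiv_lt_0_compat; lra). nra. }
  intros a Ha.
  assert (Pa : 0 < phi a) by (apply Hp; lra).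
  assert (Q : 0 < phi a / a) by (apply Rdiv_lt_0_compat; lra).
  assert (Qe : 0 < 1/e) by (apply Rdiv_lt_0_compat; lra).
  assert (Tot : forall b, 0 <= b <= a -> RInt f 0 b <= phi a * b).
  { intros b Hb.
    assert (H := RInt_le_cst f (phi a) 0 b ltac:(lra) ltac:(apply fint; auto; lra)).
    rewrite Rminus_0_r in H. apply H.
    intros x Hx. unfold f.
    assert (phi x <= phi a) by (apply Hi; lra).
    assert (0 < phi x) by (apply Hp; lra).
    replace (phi a) with (phi a / 1) by field.
    apply div_le; nra. }
  destruct (Rle_lt_dec a B) as [Hl|Hl].
  - apply Rle_trans with (phi a * a); [apply Tot; lra|].
    replace (phi a * a) with (a^2 * (phi a / a)) by (field; lra).
    apply Rmult_le_compat_r; [lra|]. assert (a^2 <= B^2) by nra. lra.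
  - rewrite <- (RInt_Chasles f 0 B a) by (apply fint; auto; lra).
    unfold plus; simpl.
    assert (PB : 0 < phi B) by (apply Hp; lra).
    assert (RB : 0 < Rpower B e) by (unfold Rpower; apply exp_pos).
    assert (Ra : 0 < Rpower a e) by (unfold Rpower; apply exp_pos).
    assert (RBa : Rpower B e <= Rpower a e) by (apply Rle_Rpower_l; lra).
    assert (Pw : forall x, 0 < x -> Rpower x (1+e) = x * Rpower x e).
    { intros x Hx. rewrite Rpower_plus, Rpower_1 by lra. reflexivity. }
    assert (F1 : RInt f 0 B <= B^2 * (phi a / a)).
    { apply Rle_trans with (phi B * B); [|].
      { assert (H := RInt_le_cst f (phi B) 0 B ltac:(lra) ltac:(apply fint; auto; lra)).
        rewrite Rminus_0_r in H. apply H.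
        intros x Hx. unfold f.
        assert (phi x <= phi B) by (apply Hi; lra).
        assert (0 < phi x) by (apply Hp; lra).
        replace (phi B) with (phi B / 1) by field.
        apply div_le; nra. }
      assert (H := Hinc B a HBA ltac:(lra)).
      rewrite !Pw in H by lra.
      assert (phi B / B <= phi a / a).
      { replace (phi B / B) with (phi B / (B * Rpower B e) * Rpower B e) by (field; lra).
        replace (phi a / a) with (phi a / (a * Rpower a e) * Rpower a e) by (field; lra).
        apply Rmult_le_compat; try lra.
        apply Rlt_le, Rdiv_lt_0_compat; nra. }
      replace (phi B * B) with (B^2 * (phi B / B)) by (field; lra).
      apply Rmult_le_compat_l; nra. }
    set (K := phi a / Rpower a (1+e)).
    assert (HK : K * Rpower a e = phi a / a) by (unfold K; rewrite Pw by lra; field; lra).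
    assert (HKp : 0 < K) by (unfold K; apply Rdiv_lt_0_compat; [lra|unfold Rpower; apply exp_pos]).
    assert (IG : is_RInt (fun x => scal K (Rpower x e / x)) B a (scal K ((Rpower a e - Rpower B e)/e))).
    { apply (@is_RInt_scal R_NormedModule). apply pow_int; lra. }
    assert (F2 : RInt f B a <= 1/e * (phi a / a)).
    { apply Rle_trans with (RInt (fun x => scal K (Rpower x e / x)) B a).
      - apply RInt_le; [lra| apply fint; auto; lra| eexists; exact IG|].
        intros x Hx. unfold f, scal; simpl; unfold mult; simpl.
        assert (H := Hinc x a ltac:(lra) ltac:(lra)). fold K in H.
        rewrite Pw in H by lra.
        assert (Rx : 0 < Rpower x e) by (unfold Rpower; apply exp_pos).
        assert (Px : 0 < phi x) by (apply Hp; lra).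
        assert (H2 := Rmult_le_compat_r (x * Rpower x e) _ _ ltac:(nra) H).
        replace (phi x / (x * Rpower x e) * (x * Rpower x e)) with (phi x) in H2 by (field; nra).
        replace (K * (Rpower x e / x)) with (K * (x * Rpower x e) / (x^2)) by (field; lra).
        apply div_le; nra.
      - rewrite (is_RInt_unique _ _ _ _ IG). unfold scal; simpl; unfold mult; simpl.
        rewrite <- HK.
        replace (K * ((Rpower a e - Rpower B e) / e)) with (1/e * (K * Rpower a e) - 1/e * (K * Rpower B e)) by (field; lra).
        assert (0 < 1/e * (K * Rpower B e)) by (apply Rmult_lt_0_compat; nra).
        lra. }
    lra.
Qed.

Theorem lemma4 (phi : R -> R) :
  cont_on_nonneg phi -> incr_on_nonneg phi -> pos_on_nonneg phi ->
  divergent_integral phi ->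
  (normally_growing phi ->
     exists c, 0 < c /\ forall a, 1 <= a ->
       RInt (fun x => phi x / (x ^ 2 + 1)) 0 a >= c * (phi a / a)) /\
  (rapidly_growing phi ->
     exists C, 0 < C /\ forall a, 1 <= a ->
       RInt (fun x => phi x / (x ^ 2 + 1)) 0 a <= C * (phi a / a)).
Proof.
  intros Hc Hi Hp _. split; [apply part1 | apply part2]; auto.
Qed.
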